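(* Let $\mathcal{C}\le\mathbb{F}_q^n$ be a linear code of even length $n$ with $q\neq 2$, and suppose $W_\mathcal{C}(x)=(x^2+a)^{n/2}$ for some $a\in\mathbb{R}\setminus\{0\}$. Then $a=q-1$ and $\mathcal{C}$ is monomially equivalent to $\bigoplus_{i=1}^{n/2}\langle(1,1)\rangle_{\mathbb{F}_q}$.
   Context: $W_\mathcal{C}(x)=\sum_{c\in\mathcal{C}}x^{n-\mathrm{wt}(c)}$, where $\mathrm{wt}(c)$ is the number of nonzero coordinates of $c$. Two codes in $\mathbb{F}_q^n$ are monomially equivalent if one is the image of the other under $v\mapsto DPv$ with $D$ an invertible diagonal matrix and $P$ a permutation matrix. $\bigoplus_{i=1}^{n/2}\langle(1,1)\rangle_{\mathbb{F}_q}\le\mathbb{F}_q^n$ is the code with block-diagonal generator matrix consisting of $n/2$ blocks $(1\ 1)$. *)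

(* Defs.v *)
From HB Require Import structures.
From mathcomp Require Import all_boot all_order all_algebra all_fingroup all_field.
Set Implicit Arguments. Unset Strict Implicit. Unset Printing Implicit Defensive.
Import Order.TTheory GRing.Theory Num.Theory.
Local Open Scope ring_scope.

Definition wt (F : finFieldType) (n : nat) (c : 'rV[F]_n) : nat :=
  #|[set i : 'I_n | c 0 i != 0]|.

Definition weight_enum (R : nzRingType) (F : finFieldType) (n : nat)
  (C : {vspace 'rV[F]_n}) : {poly R} :=
  \sum_(c : 'rV[F]_n | c \in C) 'X^(n - wt c).

(* The monomial map v |-> D P v : coordinate i becomes d i * v (s i). *)
Definition monomial_map (F : finFieldType) (n : nat) (d : 'I_n -> F) (s : 'S_n)
  (v : 'rV[F]_n) : 'rV[F]_n := \row_i (d i * v 0 (s i)).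

Definition mon_equiv (F : finFieldType) (n : nat) (C1 C2 : {vspace 'rV[F]_n}) : Prop :=
  exists (d : 'I_n -> F) (s : 'S_n),
    (forall i, d i != 0) /\
    (forall w, w \in C2 <-> exists2 v, v \in C1 & w = monomial_map d s v).

(* Generator row i of the block-diagonal matrix with blocks (1 1):
   ones exactly in coordinates 2i and 2i+1. *)
Definition pair_row (F : finFieldType) (n i : nat) : 'rV[F]_n :=
  \row_(j < n) (if (j : nat)./2 == i then 1 else 0).

Definition pair_code (F : finFieldType) (n : nat) : {vspace 'rV[F]_n} :=
  <<[seq pair_row F n i | i <- iota 0 n./2]>>%VS.

(* Main.v *)
Require Import Defs.
From HB Require Import structures.
From mathcomp Require Import all_boot all_order all_algebra all_fingroup all_field.
From mathcomp Require Import zify ring.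
From Stdlib Require Import Lia.
Set Implicit Arguments. Unset Strict Implicit. Unset Printing Implicit Defensive.
Import Order.TTheory GRing.Theory Num.Theory.
Local Open Scope ring_scope.

Lemma pc_const (F : finFieldType) (n : nat) (w : 'rV[F]_n) : w \in pair_code F n ->
  forall j j' : 'I_n, j./2 = j'./2 -> w 0 j = w 0 j'.
Proof.
rewrite /pair_code => /coord_span -> j j' h; rewrite !summxE; apply: eq_bigr => i _.
rewrite !mxE; congr (_ * _) => /=.
have hi : (i < size (iota 0 n./2))%N by rewrite size_iota; exact: ltn_ord.
by rewrite (nth_map 0%N) // !mxE h.
Qed.

Lemma pc_mem (F : finFieldType) (n : nat) (w : 'rV[F]_n) : ~~ odd n ->
  (forall j j' : 'I_n, j./2 = j'./2 -> w 0 j = w 0 j') -> w \in pair_code F n.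
Proof.
move=> ev hw.
have -> : w = \sum_(j : 'I_n | ~~ odd j) w 0 j *: pair_row F n j./2.
  apply/rowP => l; rewrite summxE.
  have hl : ((l./2).*2 < n)%N.
    by have := odd_double_half l; have := ltn_ord l; lia.
  rewrite (bigD1 (Ordinal hl)) /=; last by rewrite odd_double.
  rewrite big1 ?addr0.
    by rewrite !mxE doubleK eqxx mulr1; apply: hw; rewrite doubleK.
  move=> j /andP[ej nj]; rewrite !mxE; case: eqP; rewrite ?mulr0 // => e.
  move/eqP: nj; case; apply: val_inj => /=.
  by rewrite e; have := odd_double_half j; rewrite (negbTE ej).
apply: memv_suml => j ej; apply: memvZ; apply: memv_span; apply: map_f.
rewrite mem_iota add0n /=.
have := odd_double_half j; have := odd_double_half n; rewrite (negbTE ev) (negbTE ej).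
have := ltn_ord j; rewrite -!mul2n; lia.
Qed.
Section Core.
Variable F : finFieldType.
Variable n : nat.
Variable C : {vspace 'rV[F]_n}.

Definition w0 (x : 'rV[F]_n) (i j : 'I_n) :=
  #|[set k | [&& k != i, k != j & x 0 k != 0]]|.

Lemma wt_split (x : 'rV[F]_n) i j : i != j ->
  wt x = addn (addn (w0 x i j) (x 0 i != 0)) (x 0 j != 0).
Proof.
move=> hij; rewrite /wt (cardsD1 i) (cardsD1 j) /w0.
have -> : [set k | x 0 k != 0] :\ i :\ j = [set k | [&& k != i, k != j & x 0 k != 0]].
  by apply/setP=> k; rewrite !inE; case: (k != i); case: (k != j).
rewrite !inE (eq_sym j) hij /=.
set A := #|_|; case: (x 0 i != 0); case: (x 0 j != 0); rewrite /= ?add0n ?addn0 ?addn1 ?add1n //; lia.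
Qed.

Lemma w0_ext (x y : 'rV[F]_n) i j :
  (forall k, k != i -> k != j -> x 0 k = y 0 k) -> w0 x i j = w0 y i j.
Proof.
move=> h; rewrite /w0; apply: eq_card => k; rewrite !inE.
by case E1: (k != i); case E2: (k != j) => //=; rewrite h.
Qed.

Lemma supp2 (g : 'rV[F]_n) i j k : wt g = 2%N -> i != j -> g 0 i != 0 -> g 0 j != 0 ->
  k != i -> k != j -> g 0 k = 0.
Proof.
move=> hw hij hi hj hki hkj; move: hw; rewrite (wt_split g hij) hi hj.
move=> /eqP; rewrite -[2%N]/(0 + 1 + 1)%N !eqn_add2r => /eqP/cards0_eq/setP/(_ k).
by rewrite !inE hki hkj /=; apply: contraFeq.
Qed.

Hypothesis q3 : (2 < #|F|)%N.
Hypothesis Ceven : forall c, c \in C -> ~~ odd (wt c).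



Lemma avoid2 (x y : F) : exists z, (z != x) && (z != y).
Proof.
have : ~~ ([set: F] \subset [set x; y]).
  apply: contraL q3 => /subset_leq_card; rewrite cardsT cards2 -leqNgt => h.
  by apply: leq_trans h _; case: (x != y).
by case/subsetPn => z _; rewrite !inE negb_or => ?; exists z.
Qed.

Lemma lin_eq0 (c g mu : F) : g != 0 -> (c + mu * g == 0) = (mu == - (c / g)).
Proof.
move=> gn; apply/eqP/eqP => [h|->]; last by rewrite mulNr divfK // subrr.
apply: (mulIf gn); rewrite mulNr divfK //; apply/eqP.
by rewrite -subr_eq0 opprK addrC h.
Qed.

Lemma core_P g i j : g \in C -> wt g = 2%N -> i != j -> g 0 i != 0 -> g 0 j != 0 ->
  forall c, c \in C -> c 0 i * g 0 j = c 0 j * g 0 i.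
Proof.
move=> gC wg hij gi gj c cC; apply/eqP; apply: contraT => hne.
set mu1 := - (c 0 i / g 0 i); set mu2 := - (c 0 j / g 0 j).
have mu12 : mu1 != mu2.
  apply: contra hne; rewrite /mu1 /mu2 eqr_opp eqr_div //.
have [mu3 /andP[m31 m32]] := avoid2 mu1 mu2.
have hC mu : c + mu *: g \in C by rewrite memvD // memvZ.
have hw mu : wt (c + mu *: g) = addn (addn (w0 c i j) (mu != mu1)) (mu != mu2).
  rewrite (wt_split _ hij) !mxE (lin_eq0 _ _ gi) (lin_eq0 _ _ gj); congr (addn (addn _ _) _).
  apply: w0_ext => k ki kj; rewrite !mxE (supp2 wg hij gi gj ki kj); by rewrite mulr0 addr0.
have := Ceven (hC mu1); have := Ceven (hC mu3); rewrite !hw eqxx m31 m32 mu12.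
by rewrite /= !addn1 /= addn0 !negbK => /negP.
Qed.

Lemma card_setP (T : finType) (A : {set T}) (P : pred T) :
  #|[set x in A | P x]| = (\sum_(x in A) P x)%N.
Proof.
rewrite -sum1_card big_mkcond /= [RHS]big_mkcond /=; apply: eq_bigr => x _.
by rewrite !inE; case: (x \in A); case: (P x).
Qed.

Lemma partner (c : 'rV[F]_n) i : wt c = 2%N -> c 0 i != 0 -> exists2 j, j != i & c 0 j != 0.
Proof.
move=> wc ci; apply/exists_inP; apply: contraT => /exists_inPn h.
have : ([set k | c 0 k != 0] \subset [set i]).
  apply/subsetP => k; rewrite !inE; apply: contraR => ki.
  by have := h k ki; rewrite negbK.
by move/subset_leq_card; rewrite -/(wt c) wc cards1.
Qed.

Definition W2 := [set c | (c \in C) && (wt c == 2%N)].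
Definition Ni i := #|[set c in W2 | c 0 i != 0]|.

Lemma prop2 (c c' : 'rV[F]_n) i : c \in W2 -> c' \in W2 -> c 0 i != 0 -> c' 0 i != 0 ->
  c' = (c' 0 i / c 0 i) *: c.
Proof.
rewrite !inE => /andP[cC /eqP wc] /andP[cC' /eqP wc'] ci ci'.
have [j ji cj] := partner wc ci.
have hij : i != j by rewrite eq_sym.
have e := core_P cC wc hij ci cj cC'.
have cj' : c' 0 j != 0.
  apply/eqP => h0; move: e; rewrite h0 mul0r => /eqP.
  by rewrite mulf_eq0 (negbTE ci') (negbTE cj).
apply/rowP => k; rewrite !mxE.
have [->|ki] := eqVneq k i; first by rewrite divfK.
have [->|kj] := eqVneq k j.
  by rewrite mulrAC e mulfK.
by rewrite (supp2 wc hij ci cj ki kj) (supp2 wc' hij ci' cj' ki kj) mulr0.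
Qed.

Lemma Ni_le i : (Ni i <= #|F| - 1)%N.
Proof.
have [E|[c0 hc0]] := set_0Vmem [set c in W2 | c 0 i != 0].
  by rewrite /Ni E cards0.
have hT : #|[set: F] :\ 0| = (#|F| - 1)%N by rewrite -cardsT [in RHS](cardsD1 0) inE /= add1n subn1.
rewrite -hT; apply: leq_trans (leq_imset_card (fun l : F => l *: c0) _).
apply: subset_leq_card; apply/subsetP => c; move: hc0; rewrite !inE => /andP[w0 ci0] /andP[w ci].
apply/imsetP; exists (c 0 i / c0 0 i); last by apply: prop2; rewrite ?inE.
by rewrite !inE mulf_neq0 // invr_eq0.
Qed.

Lemma sumN : (\sum_i Ni i = 2 * #|W2|)%N.
Proof.
rewrite /Ni; under eq_bigr => i _ do rewrite card_setP.
rewrite exchange_big /= -sum1_card big_distrr /=; apply eq_bigr => c.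
rewrite inE => /andP[_ /eqP <-]; rewrite muln1 /wt -sum1_card /= [RHS]big_mkcond /=.
by apply: eq_bigr => i _; rewrite inE; case: (c 0 i != 0).
Qed.

Lemma cover : #|W2| = (n./2 * (#|F| - 1))%N -> ~~ odd n ->
  forall i, exists c, [/\ c \in C, wt c = 2%N & c 0 i != 0].
Proof.
move=> hW ev.
have hs : (\sum_(i < n) ((#|F| - 1) - Ni i) = 0)%N.
  rewrite sumnB => [|i _]; last exact: Ni_le.
  by rewrite sumN hW sum_nat_const card_ord mulnA mul2n even_halfK ?subnn.
move=> i; have /eqP := hs; rewrite sum_nat_eq0 => /forallP /(_ i) /=.
rewrite subn_eq0 => hi.
have : (0 < Ni i)%N by apply: leq_trans hi; rewrite subn_gt0; apply: leq_trans q3.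
rewrite card_gt0 => /set0Pn [c]; rewrite !inE => /andP[/andP[cC /eqP wc] ci].
by exists c.
Qed.

Lemma w0_le (x : 'rV[F]_n) i j : i != j -> (w0 x i j + 2 <= n)%N.
Proof.
move=> hij; set S := [set k | [&& k != i, k != j & x 0 k != 0]].
have := max_card (mem (i |: (j |: S))); rewrite card_ord !cardsU1.
have -> : (i \notin j |: S) by rewrite !inE negb_or hij /= eqxx.
have -> : (j \notin S) by rewrite !inE eqxx /= andbF.
rewrite /w0 -/S; lia.
Qed.

Lemma orbit_id (R : realFieldType) g i j : g \in C -> wt g = 2%N -> i != j ->
  g 0 i != 0 -> g 0 j != 0 ->
  weight_enum R C *+ #|F| =
  ('X^2 + ((#|F| - 1)%:R : R)%:P) * \sum_(c | c \in C) 'X^(n - 2 - w0 c i j).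
Proof.
move=> gC wg hij gi gj.
have -> : weight_enum R C *+ #|F| =
    \sum_(mu : F) \sum_(c | c \in C) 'X^(n - wt (c + mu *: g)).
  rewrite -sumr_const; apply: eq_bigr => mu _.
  rewrite /weight_enum (reindex_inj (addIr (mu *: g))) /=.
  by apply: eq_bigl => c; rewrite rpredDr // memvZ.
rewrite exchange_big mulr_sumr; apply: eq_bigr => c cC.
have e := core_P gC wg hij gi gj cC.
set mu1 := - (c 0 i / g 0 i).
have hw mu : wt (c + mu *: g) = (w0 c i j + (mu != mu1) + (mu != mu1))%N.
  rewrite (wt_split _ hij) !mxE (lin_eq0 _ _ gi) (lin_eq0 _ _ gj).
  have -> : - (c 0 j / g 0 j) = mu1.
    by rewrite /mu1; congr (- _); apply/eqP; rewrite eqr_div // e.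
  congr (addn (addn _ _) _).
  apply: w0_ext => k ki kj; rewrite !mxE (supp2 wg hij gi gj ki kj); by rewrite mulr0 addr0.
under eq_bigr => mu _ do rewrite hw.
rewrite (bigD1 mu1) //= eqxx /= !addn0.
under eq_bigr => mu hmu do rewrite hmu /= addn1 addn1.
rewrite sumr_const cardC1.
have hl := w0_le c hij.
have -> : (n - w0 c i j = (n - 2 - w0 c i j) + 2)%N by lia.
have -> : (n - (w0 c i j).+2 = n - 2 - w0 c i j)%N by lia.
rewrite exprD mulrDl polyC_natr mulr_natl -subn1 mulrC; congr (_ + _).
Qed.

Lemma poly_eqab (R : realFieldType) (a b : R) m k (Q : {poly R}) : (0 < m)%N -> (0 < k)%N ->
  ('X^2 + a%:P) ^+ m *+ k = ('X^2 + b%:P) * Q -> a = b.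
Proof.
move=> m0 k0 h.
have [Q0 hQ0] : exists Q0, ('X^2 + a%:P) ^+ m = ('X^2 + b%:P) * Q0 + ((a - b) ^+ m)%:P.
  elim: (m) => [|m' [Q1 ih]]; first by exists 0; rewrite mulr0 add0r expr0.
  exists (Q1 * ('X^2 + a%:P) + ((a - b) ^+ m')%:P).
  rewrite exprS ih [(a - b) ^+ _.+1]exprS polyCM polyCB; ring.
move: h; rewrite hQ0 mulrnDl => /eqP; rewrite -subr_eq0.
have -> : ('X^2 + b%:P) * Q0 *+ k + ((a - b) ^+ m)%:P *+ k - ('X^2 + b%:P) * Q =
   ((a - b) ^+ m *+ k)%:P - ('X^2 + b%:P) * (Q - Q0 *+ k).
  rewrite polyCMn; rewrite mulrBr mulrnAr; ring.
rewrite subr_eq0 => /eqP E.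
have [Z|NZ] := eqVneq (Q - Q0 *+ k) 0.
  move: E; rewrite Z mulr0 => /eqP; rewrite polyC_eq0 mulrn_eq0 eqn0Ngt k0 /=.
  by rewrite expf_eq0 m0 subr_eq0 => /eqP.
have := size_polyC_leq1 ((a - b) ^+ m *+ k); rewrite E size_mul //; last first.
  by rewrite -size_poly_eq0 size_XnaddC.
rewrite size_XnaddC //; move: NZ; rewrite -size_poly_eq0; lia.
Qed.

Lemma coef_we (R : realFieldType) k :
  (weight_enum R C)`_k = (#|[set c | (c \in C) && (k == n - wt c)%N]|)%:R.
Proof.
rewrite /weight_enum coef_sum; under eq_bigr => c _ do rewrite coefXn.
rewrite -natr_sum; congr (_ %:R).
rewrite -sum1_card [RHS]big_mkcond [LHS]big_mkcond /=; apply: eq_bigr => c _.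
by rewrite !inE; case: (c \in C); case: (k == n - wt c)%N.
Qed.

Lemma wt_le (x : 'rV[F]_n) : (wt x <= n)%N.
Proof. by rewrite /wt; have := max_card (mem [set i | x 0 i != 0]); rewrite card_ord. Qed.

Hypothesis cov : forall i, exists c, [/\ c \in C, wt c = 2%N & c 0 i != 0].

Definition G i : 'rV[F]_n := odflt 0 [pick c | [&& c \in C, wt c == 2%N & c 0 i != 0]].

Lemma G_spec i : [/\ G i \in C, wt (G i) = 2%N & G i 0 i != 0].
Proof.
rewrite /G; case: pickP => [c /and3P[cC /eqP wc ci] | h] //=.
have [c [cC wc ci]] := cov i; move: (h c); by rewrite cC wc eqxx ci.
Qed.

Definition pt i : 'I_n := odflt i [pick j | (j != i) && (G i 0 j != 0)].

Lemma pt_spec i : pt i != i /\ G i 0 (pt i) != 0.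
Proof.
have [_ wG Gi] := G_spec i; have [j ji Gj] := partner wG Gi.
rewrite /pt; case: pickP => [k /andP[]|h] //=.
by move: (h j); rewrite ji Gj.
Qed.

Lemma Gsupp i k : k != i -> k != pt i -> G i 0 k = 0.
Proof.
have [_ wG Gi] := G_spec i; have [pi Gp] := pt_spec i.
by apply: supp2 wG _ Gi Gp; rewrite eq_sym.
Qed.

Lemma Gprop i v : v \in C -> v 0 i * G i 0 (pt i) = v 0 (pt i) * G i 0 i.
Proof.
have [GC wG Gi] := G_spec i; have [pi Gp] := pt_spec i.
by apply: core_P => //; rewrite eq_sym.
Qed.

Lemma ppK i : pt (pt i) = i.
Proof.
have [GC wG Gi] := G_spec i; have [pi Gp] := pt_spec i.
have [GC' wG' Gi'] := G_spec (pt i); have [pi' Gp'] := pt_spec (pt i).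
have Gpi : G (pt i) 0 i != 0.
  have := Gprop i GC'; apply: contra_eqN => /eqP ->; rewrite mul0r eq_sym mulf_neq0 //.
apply/eqP; apply: contraT => h; move: Gpi; rewrite Gsupp ?eqxx //.
  by rewrite eq_sym.
by rewrite eq_sym.
Qed.

Definition isR i := (nat_of_ord i <= nat_of_ord (pt i))%N.
Definition mn i := if isR i then i else pt i.

Lemma pt_neq i : nat_of_ord (pt i) != nat_of_ord i.
Proof. by have [h _] := pt_spec i. Qed.

Lemma isR_mn i : isR (mn i).
Proof.
rewrite /mn /isR; case: ifP => // h; rewrite ppK; lia.
Qed.

Lemma mnR r : isR r -> mn r = r.
Proof. by rewrite /mn => ->. Qed.

Definition cnt (r : 'I_n) := #|[set r' | isR r' & (nat_of_ord r' < nat_of_ord r)%N]|.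

Lemma cnt_lt r r' : isR r -> (nat_of_ord r < nat_of_ord r')%N -> (cnt r < cnt r')%N.
Proof.
move=> hr hrr; apply: proper_card; apply/properP; split.
  apply/subsetP => x; rewrite !inE => /andP[-> /= h]; lia.
by exists r; rewrite !inE ?hr ?hrr ?ltnn.
Qed.

Lemma cnt_inj r r' : isR r -> isR r' -> cnt r = cnt r' -> r = r'.
Proof.
move=> hr hr' e; apply: val_inj => /=.
case: (ltngtP r r') => // h.
  by have := cnt_lt hr h; rewrite e ltnn.
by have := cnt_lt hr' h; rewrite e ltnn.
Qed.

Definition Rs := [set r | isR r].

Lemma cardR : (#|Rs|.*2 = n)%N.
Proof.
have e : ~: Rs = pt @: Rs.
  apply/setP => i; rewrite !inE; apply/idP/imsetP.
    move=> h; exists (pt i); last by rewrite ppK.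
    by rewrite inE /isR ppK; move: h; rewrite /isR; lia.
  move=> [r]; rewrite inE /isR => hr ->; rewrite ppK.
  have := pt_neq r; lia.
have := cardsC Rs; rewrite e card_imset; last exact: (can_inj ppK).
by rewrite card_ord -addnn.
Qed.

Lemma cnt_bound r : isR r -> (cnt r < #|Rs|)%N.
Proof.
move=> hr; apply: proper_card; apply/properP; split.
  by apply/subsetP => x; rewrite !inE => /andP[].
by exists r; rewrite !inE ?hr ?ltnn.
Qed.

Definition gn i := ((~~ isR i) + (cnt (mn i)).*2)%N.

Lemma gn_lt i : (gn i < n)%N.
Proof.
have h1 := cnt_bound (isR_mn i); have h2 := cardR; rewrite /gn.
move: h1 h2; set a := cnt _; set b := #|Rs|; case: (~~ isR i); rewrite -!mul2n; lia.
Qed.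

Definition go i : 'I_n := Ordinal (gn_lt i).

Lemma go_half i : (nat_of_ord (go i))./2 = cnt (mn i).
Proof. by rewrite /= /gn half_bit_double. Qed.

Lemma go_odd i : odd (go i) = ~~ isR i.
Proof. by rewrite /= /gn oddD odd_double addbF; case: (isR i). Qed.

Lemma go_inj : injective go.
Proof.
move=> i j e.
have hm : mn i = mn j.
  by apply: cnt_inj; rewrite ?isR_mn // -!go_half e.
have ho : isR i = isR j by apply: negb_inj; rewrite -!go_odd e.
by move: hm; rewrite /mn ho; case: (isR j) => // /(can_inj ppK).
Qed.

Definition s := ((perm go_inj)^-1)%g.

Lemma s_go i : s (go i) = i.
Proof. by rewrite /s -(permE go_inj) permK. Qed.

Lemma go_s j : go (s j) = j.
Proof. by rewrite /s -(permE go_inj) permKV. Qed.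

Definition d j := let i := s j in if isR i then 1 else G i 0 (pt i) / G i 0 i.

Lemma dK v i : v \in C -> d (go i) * v 0 i = v 0 (mn i).
Proof.
move=> vC; rewrite /d s_go /mn; case: ifP => _; first by rewrite mul1r.
have [_ _ Gi] := G_spec i.
by rewrite mulrC mulrA Gprop // mulfK.
Qed.

Lemma d_neq0 j : d j != 0.
Proof.
rewrite /d; case: ifP => _; first exact: oner_neq0.
have [_ _ Gi] := G_spec (s j); have [_ Gp] := pt_spec (s j).
by rewrite mulf_neq0 // invr_eq0.
Qed.

Lemma vR (w : 'rV[F]_n) r : isR r ->
  (\sum_(r' | isR r') (w 0 (go r') / G r' 0 r') *: G r') 0 r = w 0 (go r).
Proof.
move=> hr; rewrite summxE (bigD1 r) //= big1 ?addr0.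
  by rewrite !mxE divfK //; have [_ _ ->] := G_spec r.
move=> r' /andP[hr' nr]; rewrite !mxE (@Gsupp r' r) ?mulr0 //; first by rewrite eq_sym.
apply/eqP => e; move: hr hr'; rewrite /isR e ppK => h1 h2.
by move/eqP: nr; apply; rewrite e; apply: ord_inj; lia.
Qed.

Lemma mon_main : ~~ odd n -> mon_equiv C (pair_code F n).
Proof.
move=> ev; exists d, s; split; first exact: d_neq0.
move=> w; split.
  move=> hw; set v := \sum_(r' | isR r') (w 0 (go r') / G r' 0 r') *: G r'.
  have vC : v \in C.
    by apply: memv_suml => r _; apply: memvZ; have [] := G_spec r.
  exists v => //; apply/rowP => j; rewrite mxE -[in d j](go_s j) dK //.
  rewrite vR ?isR_mn //; apply: (pc_const hw).
  rewrite -[in LHS](go_s j) go_half /= /gn half_bit_double (mnR (isR_mn (s j))).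
  reflexivity.
move=> [v vC ->]; apply: pc_mem => // j j' h; rewrite !mxE.
rewrite -[in d j](go_s j) -[in d j'](go_s j') !dK //; congr (v 0 _).
by apply: cnt_inj; rewrite ?isR_mn // -!go_half !go_s.
Qed.
End Core.

Lemma coef_pow (R : realFieldType) (a : R) m k :
  (('X^2 + a%:P) ^+ m)`_k = \sum_(i < m.+1) (a ^+ (m - i) * (k == (2 * i)%N)%:R) *+ 'C(m, i).
Proof.
rewrite addrC exprDn coef_sum; apply: eq_bigr => i _.
by rewrite coefMn -rmorphXn coefCM -exprM coefXn.
Qed.

Lemma coef_pow_odd (R : realFieldType) (a : R) m k : odd k -> (('X^2 + a%:P) ^+ m)`_k = 0.
Proof.
move=> ok; rewrite coef_pow big1 // => i _.
have -> : (k == (2 * i)%N) = false by apply/negbTE; apply: contraTneq ok => ->; rewrite oddM.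
by rewrite mulr0 mul0rn.
Qed.

Lemma coef_pow_two (R : realFieldType) (a : R) m :
  (('X^2 + a%:P) ^+ m.+1)`_(2 * m) = a *+ m.+1.
Proof.
rewrite coef_pow big_ord_recr /= big_ord_recr /= big1 ?add0r.
  have -> : (2 * m == 2 * m.+1)%N = false by apply/negbTE; lia.
  by rewrite eqxx mulr0 mul0rn addr0 mulr1 subSnn expr1 binSn.
move=> i _; have -> : (2 * m == 2 * i)%N = false.
  by apply/negbTE; have := ltn_ord i; lia.
by rewrite mulr0 mul0rn.
Qed.

Theorem lemma3p3 (R : realFieldType) (F : finFieldType) (n : nat)
  (C : {vspace 'rV[F]_n}) (a : R) :
  (0 < n)%N -> ~~ odd n -> #|F| != 2%N -> a != 0 ->
  weight_enum R C = ('X ^+ 2 + a%:P) ^+ n./2 ->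
  a = (#|F| - 1)%:R /\ mon_equiv C (pair_code F n).
Proof.
move=> n0 ev q2 a0 hW.
have q3 : (2 < #|F|)%N by rewrite ltn_neqAle eq_sym q2 (card_finNzRing_gt1 F).
have hn : n./2.*2 = n by rewrite even_halfK.
have [m hm] : exists m, n./2 = m.+1.
  by exists n./2.-1; move: hn n0; case: (n./2) => //=; lia.
have hcoef k : (#|[set c | (c \in C) && (k == n - wt c)%N]|%:R : R) = (('X^2 + a%:P) ^+ n./2)`_k.
  by rewrite -hW coef_we.
have Ceven : forall c, c \in C -> ~~ odd (wt c).
  move=> c cC; apply/negP => oc.
  have ok : odd (n - wt c) by rewrite oddB ?wt_le // (negbTE ev) oc.
  have := hcoef (n - wt c)%N; rewrite coef_pow_odd // => /eqP; rewrite pnatr_eq0 => /eqP/cards0_eq/setP/(_ c).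
  by rewrite !inE cC eqxx.
have hW2 : (#|W2 C|%:R : R) = a *+ m.+1.
  have := hcoef (2 * m)%N; rewrite hm coef_pow_two => <-; congr (_ %:R); apply: eq_card => c.
  rewrite !inE; case: (c \in C) => //=; have := wt_le c.
  have e2 : n = (m.+1).*2 by rewrite -hm hn.
  move: e2; rewrite -mul2n => e2 hle; apply/eqP/eqP; lia.
have [g] : exists g, g \in W2 C.
  apply/set0Pn; rewrite -card_gt0 lt0n; apply: contra_neq (_ : a *+ m.+1 != 0).
    by rewrite -hW2 => ->.
  by rewrite mulrn_eq0 negb_or a0.
rewrite inE => /andP[gC /eqP wg].
have [i gi] : exists i, g 0 i != 0.
  apply/existsP; apply: contraT; rewrite negb_exists => /forallP h.
  by move: wg; rewrite /wt (_ : [set i | g 0 i != 0] = set0) ?cards0 //; apply/setP => i; rewrite !inE (negbTE (h i)).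
have [j ji gj] := partner wg gi.
have hA : a = (#|F| - 1)%:R.
  have := orbit_id q3 Ceven R gC wg (_ : i != j) gi gj; rewrite ?(eq_sym i) // hW hm.
  move=> /(_ ji) h; by apply: (poly_eqab _ _ h) => //; apply: ltn_trans _ q3.
split; first exact: hA.
apply: (mon_main q3 Ceven _ ev).
apply: (cover q3 Ceven _ ev); apply/eqP; by rewrite -(@eqr_nat R) hW2 hA hm natrM mulr_natl.
Qed.
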